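(* Let $\sigma\in\Sigma$. The following are equivalent: (i) $A^\sigma_W=A_W$; (ii) for every proper face $\tau$ of $\sigma$ there exists $u\in\tau^\perp_{W^*}$ with $\rho_N(u)=1$ for all $\rho\in\sigma_1\setminus\tau_1$; (iii) for every $\tau\in\Sigma$ there exists $u\in(\sigma\cap\tau)^\perp_{W^*}$ with $\rho_N(u)=1$ for all $\rho\in\sigma_1\setminus\tau_1$; (iv) $\sigma$ is $W$-regular.
   Context: Let $R\subseteq\mathbb{R}$ be a principal ideal subring. Let $V$ be a real vector space of finite dimension $n$, let $N\subseteq V$ be a lattice (a free $\mathbb{Z}$-submodule of rank $n$ spanning $V$), and let $W\subseteq V$ be the $R$-submodule generated by $N$. Put $W^*=\{u\in V^*\mid u(W)\subseteq R\}$. An $N$-fan is a finite set $\Sigma$ of sharp (containing no line) polyhedral cones in $V$, each the conic hull of a finite subset of $N$, such that every face of a cone of $\Sigma$ lies in $\Sigma$ and the intersection of two cones of $\Sigma$ is a face of each. For a cone $\sigma$ put $\sigma^\perp=\{u\in V^*\mid u(\sigma)=0\}$, $\sigma^\perp_{W^*}=\sigma^\perp\cap W^*$. Let $\Sigma_1$ be the set of rays of $\Sigma$ and $\sigma_1$ the set of rays that are faces of $\sigma$. For $\rho\in\Sigma_1$ let $\rho_N$ be the primitive generator of $N\cap\rho$, viewed as the linear form $W^*\to R$, $m\mapsto m(\rho_N)$. Let $c_W\colon W^*\to R^{\Sigma_1}$, $m\mapsto(\rho_N(m))_\rho$, let $a_W\colon R^{\Sigma_1}\to A_W$ be its cokernel,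 $\alpha_\rho=a_W(\delta_\rho)$ for the standard basis $(\delta_\rho)$, and for $\sigma\in\Sigma$ let $A^\sigma_W$ be the submodule generated by $\{\alpha_\rho\mid\rho\in\Sigma_1\setminus\sigma_1\}$. A cone $\sigma$ is $W$-regular if it is the conic hull of a subset of $W$ contained in an $R$-basis of $W$. *)

(* Defs.v *)
(* V = K^n as row vectors, V^* = K^n as column vectors,
   with K an arbitrary real (ordered) field generalizing the reals. *)
From HB Require Import structures.
From mathcomp Require Import all_boot all_order all_algebra.
Unset Printing Implicit Defensive.
Import Order.TTheory GRing.Theory Num.Theory.
Local Open Scope ring_scope.

Section Defs.
Context {K : realFieldType} {n : nat}.

Definition vset := 'rV[K]_n -> Prop.
Definition set_eq (A B : vset) : Prop := forall x, A x <-> B x.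
Definition setI (A B : vset) : vset := fun x => A x /\ B x.

Definition pairing (v : 'rV[K]_n) (u : 'cV[K]_n) : K := (v *m u) 0 0.

Definition cone (g : seq 'rV[K]_n) : vset := fun x =>
  exists l : 'I_(size g) -> K,
    (forall i, 0 <= l i) /\ x = \sum_(i < size g) l i *: g`_i.

Definition sharp (A : vset) : Prop := forall x, A x -> A (- x) -> x = 0.

Definition perp (A : vset) (u : 'cV[K]_n) : Prop := forall x, A x -> pairing x u = 0.

Definition is_face (T S : vset) : Prop :=
  exists u : 'cV[K]_n, (forall x, S x -> 0 <= pairing x u) /\
     set_eq T (fun x => S x /\ pairing x u = 0).

Definition is_subring (Rp : K -> Prop) : Prop :=
  [/\ Rp 0, Rp 1, (forall x y, Rp x -> Rp y -> Rp (x - y))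
    & (forall x y, Rp x -> Rp y -> Rp (x * y))].
Definition is_ideal (Rp : K -> Prop) (I : K -> Prop) : Prop :=
  [/\ (forall x, I x -> Rp x), I 0, (forall x y, I x -> I y -> I (x + y))
    & (forall r x, Rp r -> I x -> I (r * x))].
Definition principal_ideal_subring (Rp : K -> Prop) : Prop :=
  is_subring Rp /\
  forall I, is_ideal Rp I ->
    exists g, Rp g /\ forall x, I x <-> exists r, Rp r /\ x = r * g.

(* The lattice N is given by a Z-basis: the rows of an invertible matrix B. *)
Definition inN (B : 'M[K]_n) (v : 'rV[K]_n) : Prop :=
  exists z : 'rV[int]_n, v = map_mx (fun a : int => a%:~R) z *m B.
(* W = R-submodule generated by N *)
Definition inW (Rp : K -> Prop) (B : 'M[K]_n) (v : 'rV[K]_n) : Prop :=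
  exists x : 'rV[K]_n, (forall i, Rp (x 0 i)) /\ v = x *m B.
Definition inWdual (Rp : K -> Prop) (B : 'M[K]_n) (u : 'cV[K]_n) : Prop :=
  forall w, inW Rp B w -> Rp (pairing w u).

(* A fan is a finite set of cones, given by a list S of generator lists
   (cone number i is cone_of S i). *)
Definition cone_of (S : seq (seq 'rV[K]_n)) (i : 'I_(size S)) : vset :=
  cone (nth [::] S i).

Definition is_Nfan (B : 'M[K]_n) (S : seq (seq 'rV[K]_n)) : Prop :=
  [/\ (forall (i : 'I_(size S)) v, v \in nth [::] S i -> inN B v),
      (forall i, sharp (cone_of S i)),
      (forall i (T : vset), is_face T (cone_of S i) ->
          exists j, set_eq (cone_of S j) T),
      (forall i j, is_face (setI (cone_of S i) (cone_of S j)) (cone_of S i) /\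
                   is_face (setI (cone_of S i) (cone_of S j)) (cone_of S j))
    & (* it is a set: distinct indices are distinct cones *)
      (forall i j, set_eq (cone_of S i) (cone_of S j) -> i = j)].

Definition is_ray (S : seq (seq 'rV[K]_n)) (i : 'I_(size S)) : Prop :=
  exists v, v != 0 /\ set_eq (cone_of S i) (cone [:: v]).
Definition ray_of (S : seq (seq 'rV[K]_n)) (i : 'I_(size S)) (T : vset) : Prop :=
  is_ray S i /\ is_face (cone_of S i) T.

Definition primitive_gen (B : 'M[K]_n) (A : vset) (v : 'rV[K]_n) : Prop :=
  [/\ inN B v, A v, v != 0 &
      forall w, inN B w -> A w -> exists k : nat, w = k%:R *: v].
Definition prim_gens (B : 'M[K]_n) (S : seq (seq 'rV[K]_n))
  (gen : 'I_(size S) -> 'rV[K]_n) : Prop :=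
  forall i, is_ray S i -> primitive_gen B (cone_of S i) (gen i).

Definition rhoN (S : seq (seq 'rV[K]_n)) (gen : 'I_(size S) -> 'rV[K]_n)
  (i : 'I_(size S)) (u : 'cV[K]_n) : K := pairing (gen i) u.

(* (i) A^sigma_W = A_W, with A_W = coker (c_W : W^* -> R^{Sigma_1}) unfolded:
   every y in R^{Sigma_1} is, modulo the image of c_W, an R-combination of the
   delta_rho with rho not in sigma_1.  Elements of R^{Sigma_1} are encoded as
   functions on all indices, only the values at rays mattering. *)
Definition A_sigma_eq_A (Rp : K -> Prop) (B : 'M[K]_n) (S : seq (seq 'rV[K]_n))
  (gen : 'I_(size S) -> 'rV[K]_n) (s : 'I_(size S)) : Prop :=
  forall y : 'I_(size S) -> K, (forall r, is_ray S r -> Rp (y r)) ->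
  exists (c : 'I_(size S) -> K) (m : 'cV[K]_n),
    [/\ inWdual Rp B m,
        (forall r, is_ray S r -> Rp (c r)),
        (forall r, ray_of S r (cone_of S s) -> c r = 0)
      & (forall r, is_ray S r -> y r = c r + rhoN S gen r m)].

Definition cond_ii (Rp : K -> Prop) (B : 'M[K]_n) (S : seq (seq 'rV[K]_n))
  (gen : 'I_(size S) -> 'rV[K]_n) (s : 'I_(size S)) : Prop :=
  forall T : vset, is_face T (cone_of S s) -> ~ set_eq T (cone_of S s) ->
  exists u, [/\ perp T u, inWdual Rp B u &
    forall r, ray_of S r (cone_of S s) -> ~ ray_of S r T -> rhoN S gen r u = 1].

Definition cond_iii (Rp : K -> Prop) (B : 'M[K]_n) (S : seq (seq 'rV[K]_n))
  (gen : 'I_(size S) -> 'rV[K]_n) (s : 'I_(size S)) : Prop :=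
  forall t : 'I_(size S),
  exists u, [/\ perp (setI (cone_of S s) (cone_of S t)) u, inWdual Rp B u &
    forall r, ray_of S r (cone_of S s) -> ~ ray_of S r (cone_of S t) ->
      rhoN S gen r u = 1].

Definition is_R_basis (Rp : K -> Prop) (B : 'M[K]_n) (e : seq 'rV[K]_n) : Prop :=
  [/\ (forall v, v \in e -> inW Rp B v),
      (forall w, inW Rp B w -> exists r : 'I_(size e) -> K,
          (forall i, Rp (r i)) /\ w = \sum_(i < size e) r i *: e`_i)
    & (forall r : 'I_(size e) -> K, (forall i, Rp (r i)) ->
          \sum_(i < size e) r i *: e`_i = 0 -> forall i, r i = 0)].

Definition W_regular (Rp : K -> Prop) (B : 'M[K]_n) (A : vset) : Prop :=
  exists e : seq 'rV[K]_n, is_R_basis Rp B e /\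
  exists s : seq 'rV[K]_n, {subset s <= e} /\ set_eq A (cone s).

End Defs.

(* Main.v *)
Require Import Defs.
From HB Require Import structures.
From mathcomp Require Import all_boot all_order all_algebra.
From mathcomp Require Import zify.
From Stdlib Require Import Classical ClassicalEpsilon.
Set Implicit Arguments. Unset Strict Implicit. Unset Printing Implicit Defensive.
Import Order.TTheory GRing.Theory Num.Theory.
Local Open Scope ring_scope.

Section Cones.
Context {K : realFieldType} {n : nat}.
Implicit Types (g : seq 'rV[K]_n) (x y v : 'rV[K]_n) (u : 'cV[K]_n).

Lemma pairingDl x y u : pairing (x + y) u = pairing x u + pairing y u.
Proof. by rewrite /pairing mulmxDl mxE. Qed.
Lemma pairingZl a x u : pairing (a *: x) u = a * pairing x u.
Proof. by rewrite /pairing -scalemxAl mxE. Qed.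
Lemma pairingDr x u1 u2 : pairing x (u1 + u2) = pairing x u1 + pairing x u2.
Proof. by rewrite /pairing mulmxDr mxE. Qed.
Lemma pairingZr a x u : pairing x (a *: u) = a * pairing x u.
Proof. by rewrite /pairing -scalemxAr mxE. Qed.
Lemma pairingNl x u : pairing (- x) u = - pairing x u.
Proof. by rewrite -scaleN1r pairingZl mulN1r. Qed.
Lemma pairingNr x u : pairing x (- u) = - pairing x u.
Proof. by rewrite -scaleN1r pairingZr mulN1r. Qed.
Lemma pairingBl x y u : pairing (x - y) u = pairing x u - pairing y u.
Proof. by rewrite pairingDl pairingNl. Qed.
Lemma pairingBr x u1 u2 : pairing x (u1 - u2) = pairing x u1 - pairing x u2.
Proof. by rewrite pairingDr pairingNr. Qed.
Lemma pairing0l u : pairing 0 u = 0.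
Proof. by rewrite /pairing mul0mx mxE. Qed.
Lemma pairing0r x : pairing x 0 = 0.
Proof. by rewrite /pairing mulmx0 mxE. Qed.
Lemma pairing_suml (I : Type) (r : seq I) (P : pred I) (F : I -> 'rV[K]_n) u :
  pairing (\sum_(i <- r | P i) F i) u = \sum_(i <- r | P i) pairing (F i) u.
Proof. by rewrite /pairing mulmx_suml summxE. Qed.
Lemma pairing_sumr (I : Type) (r : seq I) (P : pred I) (F : I -> 'cV[K]_n) x :
  pairing x (\sum_(i <- r | P i) F i) = \sum_(i <- r | P i) pairing x (F i).
Proof. by rewrite /pairing mulmx_sumr summxE. Qed.
Lemma pairing_tr x : 0 < pairing x x^T = (x != 0).
Proof.
rewrite /pairing mxE.
apply/idP/idP.
  apply: contraTneq => ->; rewrite big1 ?ltxx // => i _; by rewrite !mxE mul0r.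
move=> nz; have [i xi] : exists i, x 0 i != 0.
  apply/existsP; move: nz; apply: contraR; rewrite negb_exists => /forallP H.
  by apply/eqP/rowP => i; rewrite mxE; apply/eqP; move: (H i); rewrite negbK.
rewrite (bigD1 i) //= ltr_pwDl //.
  by rewrite mxE lt0r mulf_eq0 orbb xi /= -expr2 sqr_ge0.
by apply: sumr_ge0 => j _; rewrite mxE -expr2 sqr_ge0.
Qed.

Definition ncone g : vset := fun x => exists l : nat -> K,
  (forall i, 0 <= l i) /\ x = \sum_(0 <= i < size g) l i *: g`_i.

Lemma coneE g x : cone g x <-> ncone g x.
Proof.
split.
  move=> [l [l0 ->]].
  exists (fun k => if insub k is Some i then l i else 0); split.
    by move=> k; case: insubP.
  rewrite big_mkord; apply: eq_bigr => i _.
  by rewrite insubT ?ltn_ord // => h; congr (l _ *: _); apply: val_inj.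
move=> [l [l0 ->]]; exists (fun i => l i); split => //.
by rewrite big_mkord.
Qed.

Lemma ncone_cons a g x : ncone (a :: g) x <->
  exists t y, [/\ 0 <= t, ncone g y & x = t *: a + y].
Proof.
split.
  move=> [l [l0 ->]]; exists (l 0%N), (\sum_(0 <= i < size g) l i.+1 *: g`_i).
  split => //; first by exists (fun i => l i.+1).
  by rewrite /= big_nat_recl //= big_add1.
move=> [t [y [t0 [l [l0 ->]] ->]]].
exists (fun i => if i is i'.+1 then l i' else t); split; first by case.
by rewrite /= big_nat_recl //= big_add1.
Qed.

Lemma ncone0 g : ncone g 0.
Proof. by exists (fun _ => 0); split => //; rewrite big1 // => i _; rewrite scale0r. Qed.

Lemma ncone_nil x : ncone [::] x <-> x = 0.
Proof.
split; first by move=> [l [_ ->]]; rewrite big_geq.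
by move=> ->; apply: ncone0.
Qed.

Lemma nconeD g x y : ncone g x -> ncone g y -> ncone g (x + y).
Proof.
move=> [l [l0 ->]] [l' [l0' ->]]; exists (fun i => l i + l' i); split.
  by move=> i; rewrite addr_ge0.
by rewrite -big_split /=; apply: eq_bigr => i _; rewrite scalerDl.
Qed.

Lemma nconeZ g a x : 0 <= a -> ncone g x -> ncone g (a *: x).
Proof.
move=> a0 [l [l0 ->]]; exists (fun i => a * l i); split.
  by move=> i; rewrite mulr_ge0.
by rewrite scaler_sumr; apply: eq_bigr => i _; rewrite scalerA.
Qed.

Lemma ncone_mem g v : v \in g -> ncone g v.
Proof.
move=> vg; exists (fun i => (i == index v g)%:R); split.
  by move=> i; rewrite ler0n.
rewrite (bigD1_seq (index v g)) /=; last by apply: iota_uniq.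
  2: by rewrite mem_index_iota index_mem.
rewrite eqxx scale1r nth_index // big1 ?addr0 // => i /negbTE ->.
by rewrite scale0r.
Qed.

Lemma ncone_sub g g' x : {subset g <= g'} -> ncone g x -> ncone g' x.
Proof.
move=> sub [l [l0 ->]]; rewrite big_nat_cond.
elim/big_rec: _ => [|i y /andP[/andP[_ ilt] _] cy]; first by apply: ncone0.
apply: nconeD => //; apply: nconeZ => //; apply: ncone_mem; apply: sub.
by rewrite mem_nth.
Qed.

Lemma ncone_pairing_ge0 g x u : (forall v, v \in g -> 0 <= pairing v u) ->
  ncone g x -> 0 <= pairing x u.
Proof.
move=> H [l [l0 ->]]; rewrite pairing_suml big_nat_cond.
apply: sumr_ge0 => i /andP[/andP[_ ilt] _]; rewrite pairingZl mulr_ge0 //.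
by apply: H; rewrite mem_nth.
Qed.


Lemma ncone_map (f : 'rV[K]_n -> 'rV[K]_n) g y :
  (forall x y, f (x + y) = f x + f y) -> (forall a x, f (a *: x) = a *: f x) ->
  ncone (map f g) y -> exists z, ncone g z /\ y = f z.
Proof.
move=> fD fZ [l [l0 ->]].
have f0 : f 0 = 0 by rewrite -(scale0r 0) fZ !scale0r.
exists (\sum_(0 <= i < size g) l i *: g`_i); split; first by exists l.
rewrite (big_morph f fD f0) size_map.
apply: eq_big_nat => i /andP[_ ilt].
by rewrite fZ (nth_map 0).
Qed.

Lemma farkas g x : ~ ncone g x ->
  exists u, (forall v, v \in g -> 0 <= pairing v u) /\ pairing x u < 0.
Proof.
move: {2}(size g) (erefl (size g)) => m; elim: m g x => [|m IH] g x.
  move/size0nil => -> nx; exists (- x^T); split => //.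
  rewrite pairingNr oppr_lt0 pairing_tr; apply/eqP => x0; apply: nx.
  by rewrite x0; apply: ncone0.
case: g => // a g' [sg] nx.
have nx' : ~ ncone g' x.
  by move=> H; apply: nx; apply: ncone_sub H => v vg; rewrite inE vg orbT.
have [u [ug' ux]] := IH g' x sg nx'.
have [ua|ua] := leP 0 (pairing a u).
  exists u; split => // v; rewrite inE => /orP[/eqP->|] //; exact: ug'.
set c := pairing a u.
have cn0 : c != 0 by rewrite ltr0_neq0.
pose phi := fun w : 'rV[K]_n => w - (pairing w u / c) *: a.
have phiD : forall x y, phi (x + y) = phi x + phi y.
  move=> x1 x2; rewrite /phi pairingDl mulrDl scalerDl; by rewrite opprD addrACA.
have phiZ : forall b x, phi (b *: x) = b *: phi x.
  move=> b x1; rewrite /phi pairingZl scalerBr scalerA mulrA.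
  done.
have ny : ~ ncone (map phi g') (phi x).
  move=> /(ncone_map phiD phiZ) [z [zc ez]]; apply: nx.
  apply/ncone_cons; exists ((pairing x u - pairing z u) / c), z; split => //.
    rewrite ler_ndivlMr // mul0r subr_le0.
    apply: (le_trans (ltW ux)); apply: ncone_pairing_ge0 zc => v; exact: ug'.
  move: ez; rewrite /phi; set px := pairing x u; set pz := pairing z u.
  move=> /(congr1 (fun w => w + (px / c) *: a)); rewrite subrK => ->.
  by rewrite mulrBl scalerBl [RHS]addrAC [LHS]addrC addrA.
have [v [vh vy]] := IH _ _ (etrans (size_map phi g') sg) ny.
have key : forall w, pairing w (v - (pairing a v / c) *: u) = pairing (phi w) v.
  move=> w; rewrite /phi pairingBr pairingBl pairingZr pairingZl.
  by rewrite [in LHS]mulrAC [in RHS]mulrAC (mulrC (pairing a v)).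
exists (v - (pairing a v / c) *: u); split; last by rewrite key.
move=> w; rewrite inE => /orP[/eqP->|wg].
  rewrite pairingBr pairingZr -/c mulfVK // subrr //.
by rewrite key; apply: vh; apply: map_f.
Qed.


Lemma ncone_gen g g' x : (forall v, v \in g -> ncone g' v) -> ncone g x -> ncone g' x.
Proof.
move=> sub [l [l0 ->]]; rewrite big_nat_cond.
elim/big_rec: _ => [|i y /andP[/andP[_ ilt] _] cy]; first by apply: ncone0.
apply: nconeD => //; apply: nconeZ => //; apply: sub.
by rewrite mem_nth.
Qed.

Lemma ncone_perm g g' x : perm_eq g g' -> ncone g x -> ncone g' x.
Proof.
move=> pg; apply: ncone_sub => v; by rewrite (perm_mem pg).
Qed.

Lemma ncone_rem v g x : v \in g -> ncone g x ->
  exists t y, [/\ 0 <= t, ncone (rem v g) y & x = t *: v + y].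
Proof.
move=> vg cx; apply/ncone_cons; apply: ncone_perm cx; exact: perm_to_rem.
Qed.

Lemma ncone_pos0 l y u : ncone l y -> (forall w, w \in l -> 0 < pairing w u) ->
  pairing y u <= 0 -> y = 0.
Proof.
elim: l y => [|a l IH] y; first by move/ncone_nil.
move=> /ncone_cons [t [y' [t0 cy' ->]]] pos.
have pa : 0 < pairing a u by apply: pos; rewrite inE eqxx.
have py' : 0 <= pairing y' u.
  apply: ncone_pairing_ge0 cy' => w wl; apply: ltW; apply: pos; by rewrite inE wl orbT.
rewrite pairingDl pairingZl => H.
have ht : t * pairing a u = 0.
  apply/eqP; rewrite eq_le; apply/andP; split; last by rewrite mulr_ge0 // ltW.
  by apply: le_trans H; rewrite lerDl.
have hy : pairing y' u = 0.
  apply/eqP; rewrite eq_le py' andbT; by move: H; rewrite ht add0r.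
move/eqP: ht; rewrite mulf_eq0 (gt_eqF pa) orbF => /eqP ->.
rewrite scale0r add0r; apply: IH => //; last by rewrite hy.
by move=> w wl; apply: pos; rewrite inE wl orbT.
Qed.

Lemma ncone_single v x : ncone [:: v] x <-> exists t, 0 <= t /\ x = t *: v.
Proof.
split.
  by move=> /ncone_cons [t [y [t0 /ncone_nil -> ->]]]; exists t; rewrite addr0.
move=> [t [t0 ->]]; apply/ncone_cons; exists t, 0; split => //; last by rewrite addr0.
exact: ncone0.
Qed.

Lemma is_face_eq (T T' S S' : @vset K n) : set_eq T T' -> set_eq S S' ->
  is_face T S -> is_face T' S'.
Proof.
move=> eT eS [u [u0 H]]; exists u; split.
  by move=> x /eS; apply: u0.
move=> x; split.
  by move=> /eT /H [/eS ? ?].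
by move=> [/eS ? ?]; apply/eT/H.
Qed.

Lemma mem_rem_neq (v w : 'rV[K]_n) g : w \in g -> w != v -> w \in rem v g.
Proof.
move=> wg wv; case vg: (v \in g); last by rewrite rem_id ?vg.
move: (perm_mem (perm_to_rem vg) w); rewrite inE (negbTE wv) /= => <-; exact: wg.
Qed.

Lemma ncone_line l v x : ncone (l ++ [:: v; - v]) x ->
  exists y t, ncone l y /\ x = y + t *: v.
Proof.
move=> cx; have : ncone [:: v, - v & l] x.
  by apply: ncone_perm cx; rewrite perm_catC.
move=> /ncone_cons [a [z [a0 /ncone_cons [b [y [b0 cy ->]]] ->]]].
exists y, (a - b); split => //.
by rewrite scalerN scalerBl [RHS]addrC -[RHS]addrA.
Qed.

Lemma ncone_line_in l v x : ncone l x -> ncone (l ++ [:: v; - v]) x.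
Proof. by apply: ncone_sub => w wl; rewrite mem_cat wl. Qed.

Lemma sharp_rays g : sharp (ncone g) -> exists g',
  (forall x, ncone g x <-> ncone g' x) /\
  forall v, v \in g' -> v != 0 /\ is_face (ncone [:: v]) (ncone g).
Proof.
move: {2}(size g) (leqnn (size g)) => m; elim: m g => [|m IH] g.
  by rewrite leqn0 => /nilP -> _; exists [::]; split.
move=> sg shg.
case: (classic (exists v, v \in g /\ ncone (rem v g) v)) => [[v [vg cv]]|nH].
  have eq : forall x, ncone g x <-> ncone (rem v g) x.
    move=> x; split.
      apply: ncone_gen => w wg; case: (eqVneq w v) => [->|wv] //.
      by apply: ncone_mem; apply: mem_rem_neq.
    apply: ncone_sub => w; exact: mem_rem.
  have [||g' [e1 e2]] := IH (rem v g).
    by rewrite size_rem // -subn1 leq_subLR add1n.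
    by move=> x /eq cx /eq cmx; apply: shg.
  exists g'; split; first by move=> x; rewrite eq.
  move=> w /e2 [w0 fw]; split => //; apply: is_face_eq fw => // x.
  by split => /eq.
exists g; split => // v vg.
have v0 : v != 0.
  apply/eqP => v0; apply: nH; exists v; split => //; rewrite v0; exact: ncone0.
split => //.
set l := rem v g.
have Hw : forall w, w \in l -> ~ ncone (l ++ [:: v; - v]) (- w).
  move=> w wl /ncone_line [y [t [cy ey]]].
  have wg : w \in g by apply: (mem_rem wl).
  have cw : ncone l w by apply: ncone_mem.
  have [tp|tn] := ltP 0 (- t).
    apply: nH; exists v; split => //.
    have e : w + y = - t *: v by rewrite -[w]opprK ey opprD addrAC addNr add0r scaleNr.
    have ev : v = (- t)^-1 *: (w + y) by rewrite e scalerA mulVf ?scale1r // gt_eqF.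
    rewrite [X in ncone _ X]ev.
    by apply: nconeZ; [rewrite invr_ge0 ltW | apply: nconeD].
  have cg : forall z, ncone l z -> ncone g z by move=> z; apply: ncone_sub => q; exact: mem_rem.
  have z0 : w + y = 0.
    apply: shg; first by apply: cg; apply: nconeD.
    have -> : - (w + y) = t *: v by rewrite -[w]opprK ey opprD opprK addrAC subrr add0r.
    by apply: nconeZ; [rewrite -oppr_le0 | apply: ncone_mem].
  have w0 : w = 0.
    apply: shg; first by apply: cg.
    have -> : - w = y by apply/eqP; rewrite eq_sym -subr_eq0 opprK addrC z0.
    by apply: cg.
  apply: nH; exists w; split => //; rewrite w0; exact: ncone0.
have [u [u1 u2]] : exists u, (forall x, x \in l ++ [:: v; - v] -> 0 <= pairing x u) /\
    (forall w, w \in l -> 0 < pairing w u).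
  suff H : forall l' : seq 'rV[K]_n, {subset l' <= l} -> exists u,
      (forall x, x \in l ++ [:: v; - v] -> 0 <= pairing x u) /\
      (forall w, w \in l' -> 0 < pairing w u) by apply: H.
  elim => [|w l' IHl] sub.
    by exists 0; split => // x _; rewrite pairing0r.
  have [|u [u1 u2]] := IHl; first by move=> q ql; apply: sub; rewrite inE ql orbT.
  have wl : w \in l by apply: sub; rewrite inE eqxx.
  have [u' [u1' u2']] := farkas (Hw w wl).
  exists (u + u'); split.
    by move=> x xl; rewrite pairingDr; apply: addr_ge0; [exact: u1|exact: u1'].
  move=> q; rewrite inE => /orP[/eqP->|ql].
    rewrite pairingDr ltr_wpDl ?u1 ?mem_cat ?wl //.
    by rewrite pairingNl oppr_lt0 in u2'.
  rewrite pairingDr ltr_pwDl ?u2 // u1' // mem_cat.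
  by rewrite (sub q) // inE ql orbT.
have uv : pairing v u = 0.
  have h1 : 0 <= pairing v u by apply: u1; rewrite mem_cat !inE eqxx orbT.
  have h2 : 0 <= pairing (- v) u by apply: u1; rewrite mem_cat !inE eqxx !orbT.
  by apply/eqP; rewrite eq_le h1 andbT -oppr_ge0 -pairingNl.
exists u; split.
  move=> x; apply: ncone_pairing_ge0 => w wg; case: (eqVneq w v) => [->|wv]; first by rewrite uv.
  by apply: u1; rewrite mem_cat mem_rem_neq.
move=> x; split.
  move=> /ncone_single [t [t0 ->]]; rewrite pairingZl uv mulr0; split => //.
  by apply: nconeZ => //; apply: ncone_mem.
move=> [/(ncone_rem vg) [t [y [t0 cy ->]]]]; rewrite pairingDl pairingZl uv mulr0 add0r => py.
have -> : y = 0 by apply: (ncone_pos0 cy u2); rewrite py.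
by rewrite addr0; apply/ncone_single; exists t.
Qed.


Lemma nsum_terms0 g (l : nat -> K) w : (forall i, 0 <= l i) ->
  (forall v, v \in g -> 0 <= pairing v w) ->
  pairing (\sum_(0 <= i < size g) l i *: g`_i) w = 0 ->
  forall i, (i < size g)%N -> l i * pairing g`_i w = 0.
Proof.
move=> l0 wg; rewrite pairing_suml big_mkord => H i ilt.
have P0 : forall j : 'I_(size g), true -> 0 <= pairing (l j *: g`_j) w.
  move=> j _; rewrite pairingZl mulr_ge0 //; apply: wg; by rewrite mem_nth.
by have := @psumr_eq0P _ _ _ _ P0 H (Ordinal ilt) isT; rewrite pairingZl.
Qed.

Lemma face_trans g (F G : @vset K n) : is_face F (ncone g) -> is_face G F ->
  is_face G (ncone g).
Proof.
move=> [u [u0 eF]] [v [v0 eG]].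
set lam := 1 + \sum_(h <- g) `|pairing h v| / `|pairing h u|.
have ug : forall h, h \in g -> 0 <= pairing h u by move=> h hg; apply: u0; apply: ncone_mem.
have lam_ge : forall h, h \in g -> 0 < pairing h u ->
    pairing h u + `|pairing h v| <= lam * pairing h u.
  move=> h hg hp; rewrite mulrDl mul1r lerD2l.
  rewrite (big_rem h) //= mulrDl [`|pairing h u|]gtr0_norm // divfK ?gt_eqF // lerDl.
  apply: mulr_ge0 => //; [apply: sumr_ge0 => k _| exact: ltW].
  by apply: divr_ge0.
set w := v + lam *: u.
have wE : forall x, pairing x w = pairing x v + lam * pairing x u.
  by move=> x; rewrite pairingDr pairingZr.
have wpos : forall h, h \in g -> 0 < pairing h u -> 0 < pairing h w.
  move=> h hg hp; rewrite wE; apply: lt_le_trans (lerD (lexx _) (lam_ge h hg hp)).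
  rewrite addrCA ltr_pwDl // addrC -lerBlDr sub0r.
  by rewrite -normrN ler_norm.
have wg : forall h, h \in g -> 0 <= pairing h w.
  move=> h hg; have := ug h hg; rewrite le0r => /orP[/eqP hu|hp]; last exact: ltW (wpos h hg hp).
  rewrite wE hu mulr0 addr0; apply: v0; apply/eF; split => //; exact: ncone_mem.
exists w; split; first by move=> x; apply: ncone_pairing_ge0.
move=> x; split.
  move=> /eG [/eF [cx ux] vx]; split => //; by rewrite wE ux vx mulr0 addr0.
move=> [cx wx]; case: (cx) => l [l0 ex].
have t0 := nsum_terms0 l0 wg (etrans (esym (f_equal (fun z => pairing z w) ex)) wx).
have ux : pairing x u = 0.
  rewrite ex pairing_suml big_nat_cond big1 // => i /andP[/andP[_ ilt] _].
  rewrite pairingZl; have := ug _ (mem_nth 0 ilt); rewrite le0r => /orP[/eqP ->|hp].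
    by rewrite mulr0.
  have := t0 i ilt; move/eqP; rewrite mulf_eq0 (gt_eqF (wpos _ (mem_nth 0 ilt) hp)) orbF.
  by move/eqP ->; rewrite mul0r.
apply/eG; split; first by apply/eF.
by move: wx; rewrite wE ux mulr0 addr0.
Qed.

End Cones.

Section PID.
Context {K : realFieldType} {n : nat} (Rp : K -> Prop).
Hypothesis Rsub : is_subring Rp.

Lemma R0 : Rp 0. Proof. by case: Rsub. Qed.
Lemma R1 : Rp 1. Proof. by case: Rsub. Qed.
Lemma RB x y : Rp x -> Rp y -> Rp (x - y). Proof. by case: Rsub => _ _ H _; apply: H. Qed.
Lemma RM x y : Rp x -> Rp y -> Rp (x * y). Proof. by case: Rsub => _ _ _ H; apply: H. Qed.
Lemma RN x : Rp x -> Rp (- x). Proof. by move=> h; rewrite -sub0r; apply: RB => //; apply: R0. Qed.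
Lemma RD x y : Rp x -> Rp y -> Rp (x + y).
Proof. by move=> hx hy; rewrite -[y]opprK; apply: RB => //; apply: RN. Qed.
Lemma Rsum (I : Type) (r : seq I) (P : pred I) (F : I -> K) :
  (forall i, P i -> Rp (F i)) -> Rp (\sum_(i <- r | P i) F i).
Proof. move=> H; elim/big_rec: _ => [|i x Pi Rx]; [exact: R0| apply: RD => //; exact: H]. Qed.
Lemma Rnat (k : nat) : Rp k%:R.
Proof. elim: k => [|k IH]; [exact: R0| rewrite -addn1 natrD; apply: RD => //; exact: R1]. Qed.
Lemma Rint (z : int) : Rp (z%:~R).
Proof. case: z => k; first by rewrite -pmulrn; apply: Rnat.
by rewrite NegzE mulrNz; apply: RN; apply: Rnat. Qed.

Definition submodP (P : 'rV[K]_n -> Prop) :=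
  [/\ P 0, (forall x y, P x -> P y -> P (x + y)) & (forall r x, Rp r -> P x -> P (r *: x))].

Definition nbasis (P : 'rV[K]_n -> Prop) (f : seq 'rV[K]_n) :=
  [/\ (forall v, v \in f -> P v),
      (forall x, P x -> exists c : nat -> K, (forall i, Rp (c i)) /\
          x = \sum_(0 <= i < size f) c i *: f`_i)
    & (forall c : nat -> K, (forall i, Rp (c i)) ->
          \sum_(0 <= i < size f) c i *: f`_i = 0 -> forall i, (i < size f)%N -> c i = 0)].

Lemma sum_coord (f : seq 'rV[K]_n) (c : nat -> K) (j : 'I_n) :
  (\sum_(0 <= i < size f) c i *: f`_i) 0 j = \sum_(0 <= i < size f) c i * f`_i 0 j.
Proof. by rewrite summxE; apply: eq_bigr => i _; rewrite mxE. Qed.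

Hypothesis pid : forall I, is_ideal Rp I ->
    exists g, Rp g /\ forall x, I x <-> exists r, Rp r /\ x = r * g.

Lemma pid_basis (k : nat) (P : 'rV[K]_n -> Prop) : submodP P ->
  (forall x, P x -> (forall i, Rp (x 0 i)) /\ forall i : 'I_n, (k <= i)%N -> x 0 i = 0) ->
  exists f, nbasis P f.
Proof.
elim: k P => [|k IH] P sP hP.
  exists [::]; split => //.
    move=> x Px; exists (fun _ => 0); split => [_|]; first exact: R0.
    rewrite big_geq //; apply/rowP => i; rewrite mxE; by apply: (proj2 (hP x Px)).
case: (leqP n k) => [nk|kn].
  apply: IH => // x Px; split; first exact: (proj1 (hP x Px)).
  by move=> i ki; have := leq_trans (ltn_ord i) (leq_trans nk ki); rewrite ltnn.
set ik : 'I_n := Ordinal kn.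
case: sP => P0 PD PZ.
pose I := fun a => exists x, P x /\ x 0 ik = a.
have hI : is_ideal Rp I.
  split.
  - by move=> a [x [Px <-]]; apply: (proj1 (hP x Px)).
  - by exists 0; split => //; rewrite mxE.
  - by move=> a b [x [Px <-]] [y [Py <-]]; exists (x + y); split; [apply: PD| rewrite mxE].
  - by move=> r a Rr [x [Px <-]]; exists (r *: x); split; [apply: PZ| rewrite mxE].
have [g [Rg Ig]] := pid hI.
pose P' := fun x => P x /\ x 0 ik = 0.
have sP' : submodP P'.
  split.
  - by split => //; rewrite mxE.
  - by move=> x y [Px x0] [Py y0]; split; [apply: PD| rewrite mxE x0 y0 addr0].
  - by move=> r x Rr [Px x0]; split; [apply: PZ| rewrite mxE x0 mulr0].
have hP' : forall x, P' x -> (forall i, Rp (x 0 i)) /\ forall i : 'I_n, (k <= i)%N -> x 0 i = 0.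
  move=> x [Px xk]; split; first exact: (proj1 (hP x Px)).
  move=> i ki; case: (eqVneq (nat_of_ord i) k) => [e|ne].
    by have -> : i = ik by apply: val_inj.
  by apply: (proj2 (hP x Px)); rewrite ltn_neqAle eq_sym ne ki.
have [f' [f'P f'sp f'ind]] := IH P' sP' hP'.
case: (eqVneq g 0) => [g0|gn0].
  exists f'; split => //.
  - by move=> v /f'P [].
  - move=> x Px; apply: f'sp; split => //.
    have [r [_ ->]] : exists r, Rp r /\ x 0 ik = r * g by apply/Ig; exists x.
    by rewrite g0 mulr0.
have [x0 [Px0 x0k]] : I g by apply/Ig; exists 1; split; [exact: R1| rewrite mul1r].
exists (x0 :: f'); split.
- by move=> v; rewrite inE => /orP[/eqP->|/f'P[]].
- move=> x Px; have [r [Rr xr]] : exists r, Rp r /\ x 0 ik = r * g by apply/Ig; exists x.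
  have [|c' [Rc' ex]] := f'sp (x - r *: x0).
    split; first by apply: PD => //; rewrite -scaleNr; apply: PZ => //; apply: RN.
    by rewrite !mxE x0k xr subrr.
  exists (fun i => if i is i'.+1 then c' i' else r); split; first by case.
  rewrite /= big_nat_recl //= -ex.
  by rewrite addrC subrK.
- move=> c Rc; rewrite /= big_nat_recl //= => e0.
  have ck : c 0%N * g = 0.
    move/(congr1 (fun x : 'rV[K]_n => x 0 ik)): e0; rewrite !mxE x0k sum_coord big_nat_cond big1 ?addr0 //.
    move=> i /andP[/andP[_ ilt] _]; have [_ ->] := f'P _ (mem_nth 0 ilt).
    by rewrite mulr0.
  have c0 : c 0%N = 0 by move/eqP: ck; rewrite mulf_eq0 (negbTE gn0) orbF => /eqP.
  move: e0; rewrite c0 scale0r add0r => e0.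
  case => // i; rewrite ltnS; exact: (f'ind (fun i => c i.+1) (fun i => Rc i.+1) e0).
Qed.

End PID.

Lemma bezout_fin (I : finType) (F : I -> int) (r : seq I) : uniq r ->
  exists a : I -> int, \sum_(i <- r) a i * F i = \big[gcdz/0]_(i <- r) F i.
Proof.
elim: r => [|k r IH]; first by exists (fun _ => 0); rewrite !big_nil.
move=> /= /andP[kr ur]; have [a Ha] := IH ur.
have [u [v Huv]] := Bezoutz (F k) (\big[gcdz/0]_(i <- r) F i).
exists (fun i => if i == k then u else v * a i).
rewrite !big_cons eqxx -Huv -Ha mulr_sumr; congr (_ + _).
rewrite big_seq_cond [RHS]big_seq_cond; apply: eq_bigr => i /andP[ir _].
have -> : (i == k) = false by apply/eqP => ik; move: kr; rewrite -ik ir.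
by rewrite mulrA.
Qed.

Lemma gcd_dvd (I : eqType) (F : I -> int) (r : seq I) i : i \in r ->
  (\big[gcdz/0]_(j <- r) F j %| F i)%Z.
Proof.
elim: r => // k r IH; rewrite inE big_cons => /orP[/eqP->|ir].
  exact: dvdz_gcdl.
apply: dvdz_trans (IH ir); exact: dvdz_gcdr.
Qed.

Lemma gcd_nat (I : Type) (F : I -> int) (r : seq I) :
  exists g : nat, \big[gcdz/0]_(j <- r) F j = g%:Z.
Proof. case: r => [|k r]; first by exists 0%N; rewrite big_nil.
by rewrite big_cons; eexists. Qed.

Section GenR.
Context {K : realFieldType} {n : nat} (Rp : K -> Prop).
Hypothesis Rsub : is_subring Rp.

Lemma gen_R (B : 'M[K]_n) (g0 x : 'rV[K]_n) mu : B \in unitmx -> inN B g0 -> g0 != 0 ->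
  (forall w, inN B w -> (exists t, 0 <= t /\ w = t *: g0) -> exists k : nat, w = k%:R *: g0) ->
  (forall i, Rp (x 0 i)) -> x *m B = mu *: g0 -> Rp mu.
Proof.
move=> Bu [z ez] g0n0 prim Rx exB.
pose zi := fun i => z 0 i.
set G := \big[gcdz/0]_(i < n) zi i.
have dG : forall i, (G %| zi i)%Z by move=> i; apply: gcd_dvd; rewrite mem_index_enum.
have [g eg] : exists g : nat, G = g%:Z by apply: gcd_nat.
have gpos : (0 < g)%N.
  rewrite lt0n; apply/eqP => gz; move/eqP: g0n0; apply; rewrite ez.
  have -> : z = 0.
    by apply/rowP => i; have := dG i; rewrite eg gz dvd0z mxE => /eqP.
  rewrite (_ : map_mx _ 0 = 0) ?mul0mx //. by apply/rowP => i; rewrite !mxE.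
set z' := \row_i ((zi i) %/ G)%Z.
have ez' : map_mx (fun a : int => a%:~R) z = (g%:R : K) *: map_mx (fun a : int => a%:~R) z'.
  apply/rowP => i; rewrite !mxE -[z 0 i]/(zi i) -{1}(divzK (dG i)) eg intrM mulrC.
  by congr (_ * _); rewrite -[RHS]pmulrn.
set w := map_mx (fun a : int => a%:~R) z' *m B.
have ew : w = (g%:R : K)^-1 *: g0.
  rewrite ez ez' -scalemxAl scalerA mulVf ?scale1r //.
  by rewrite pnatr_eq0 -lt0n.
have [k ek] : exists k : nat, w = k%:R *: g0.
  apply: prim; first by exists z'.
  by exists (g%:R)^-1; split => //; rewrite invr_ge0 ler0n.
have gk : (g * k = 1)%N.
  move: ek; rewrite ew => /eqP; rewrite -subr_eq0 -scalerBl scaler_eq0 (negbTE g0n0) orbF.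
  rewrite subr_eq0 => /eqP e.
  have : (g%:R : K) * k%:R = 1 by rewrite -e mulfV // pnatr_eq0 -lt0n.
  by rewrite -natrM => /eqP; rewrite pnatr_eq1 => /eqP.
have G1 : G = 1 by rewrite eg; move/eqP: gk; rewrite muln_eq1 => /andP[/eqP -> _].
have [a Ha] := bezout_fin zi (index_enum_uniq 'I_n).
have ex : x = mu *: map_mx (fun a : int => a%:~R) z.
  apply: (can_inj (mulmxK Bu)); by rewrite exB ez scalemxAl.
have -> : mu = \sum_(i < n) (a i)%:~R * x 0 i.
  have : ((\sum_(i < n) a i * zi i) %:~R : K) = 1 by rewrite Ha -/G G1.
  rewrite rmorph_sum /= => H1.
  transitivity (mu * \sum_(i < n) ((a i * zi i)%:~R : K)); first by rewrite H1 mulr1.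
  rewrite mulr_sumr; apply: eq_bigr => i _.
  by rewrite ex !mxE intrM mulrCA.
apply: (Rsum Rsub) => i _; apply: (RM Rsub) => //; exact: (Rint Rsub).
Qed.

End GenR.

Section WLemmas.
Context {K : realFieldType} {n : nat} (Rp : K -> Prop) (B : 'M[K]_n).
Hypothesis Rsub : is_subring Rp.
Hypothesis Bu : B \in unitmx.

Lemma inW_iff w : inW Rp B w <-> forall i, Rp ((w *m invmx B) 0 i).
Proof.
split; first by move=> [x [Rx ->]]; rewrite mulmxK.
by move=> H; exists (w *m invmx B); split => //; rewrite mulmxKV.
Qed.

Lemma inWD w1 w2 : inW Rp B w1 -> inW Rp B w2 -> inW Rp B (w1 + w2).
Proof. move=> /inW_iff h1 /inW_iff h2; apply/inW_iff => i; rewrite mulmxDl mxE; exact: RD. Qed.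
Lemma inWZ r w : Rp r -> inW Rp B w -> inW Rp B (r *: w).
Proof. move=> Rr /inW_iff h; apply/inW_iff => i; rewrite -scalemxAl mxE; exact: RM. Qed.
Lemma inWN w : inW Rp B w -> inW Rp B (- w).
Proof. move=> h; rewrite -scaleN1r; apply: inWZ => //; apply: RN => //; exact: R1. Qed.
Lemma inWB w1 w2 : inW Rp B w1 -> inW Rp B w2 -> inW Rp B (w1 - w2).
Proof. by move=> h1 h2; apply: inWD => //; apply: inWN. Qed.
Lemma inW0 : inW Rp B 0.
Proof. by apply/inW_iff => i; rewrite mul0mx mxE; exact: R0. Qed.
Lemma inW_sum (I : Type) (r : seq I) (P : pred I) (F : I -> 'rV[K]_n) :
  (forall i, P i -> inW Rp B (F i)) -> inW Rp B (\sum_(i <- r | P i) F i).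
Proof. move=> H; elim/big_rec: _ => [|i x Pi Wx]; [exact: inW0| apply: inWD => //; exact: H]. Qed.
Lemma inN_W v : inN B v -> inW Rp B v.
Proof. by move=> [z ->]; exists (map_mx (fun a : int => a%:~R) z); split => // i; rewrite mxE; apply: Rint. Qed.

Lemma WdD u1 u2 : inWdual Rp B u1 -> inWdual Rp B u2 -> inWdual Rp B (u1 + u2).
Proof. by move=> h1 h2 w Ww; rewrite pairingDr; apply: RD => //; [apply: h1|apply: h2]. Qed.
Lemma WdZ r u : Rp r -> inWdual Rp B u -> inWdual Rp B (r *: u).
Proof. by move=> Rr h w Ww; rewrite pairingZr; apply: RM => //; apply: h. Qed.
Lemma WdB u1 u2 : inWdual Rp B u1 -> inWdual Rp B u2 -> inWdual Rp B (u1 - u2).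
Proof. by move=> h1 h2 w Ww; rewrite pairingBr; apply: RB => //; [apply: h1|apply: h2]. Qed.
Lemma Wd0 : inWdual Rp B 0.
Proof. by move=> w _; rewrite pairing0r; apply: R0. Qed.
Lemma Wd_sum (I : Type) (r : seq I) (P : pred I) (F : I -> 'cV[K]_n) :
  (forall i, P i -> inWdual Rp B (F i)) -> inWdual Rp B (\sum_(i <- r | P i) F i).
Proof. move=> H; elim/big_rec: _ => [|i x Pi Wx]; [exact: Wd0| apply: WdD => //; exact: H]. Qed.

Lemma pairingW x u : pairing (x *m B) (invmx B *m u) = (x *m u) 0 0.
Proof. by rewrite /pairing mulmxA mulmxK. Qed.

Lemma dual_coord (e : seq 'rV[K]_n) (j : 'I_(size e)) : is_R_basis Rp B e ->
  exists u, inWdual Rp B u /\ forall k : 'I_(size e), pairing e`_k u = (k == j)%:R.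
Proof.
move=> [eW esp eind].
have Hb : forall i : 'I_n, exists c : 'I_(size e) -> K,
    (forall k, Rp (c k)) /\ row i B = \sum_(k < size e) c k *: e`_k.
  move=> i; apply: esp; exists (delta_mx 0 i); split; last by rewrite rowE.
  by move=> l; rewrite mxE; case: (_ && _); [exact: R1|exact: R0].
pose C := fun i => proj1_sig (constructive_indefinite_description _ (Hb i)).
have HC : forall i, (forall k, Rp (C i k)) /\ row i B = \sum_(k < size e) C i k *: e`_k.
  by move=> i; rewrite /C; case: constructive_indefinite_description.
pose t : 'cV[K]_n := \col_i C i j.
have pt : forall x, pairing (x *m B) (invmx B *m t) = \sum_i x 0 i * C i j.
  by move=> x; rewrite pairingW mxE; apply: eq_bigr => i _; rewrite mxE.
have expand : forall x, x *m B = \sum_(l < size e) (\sum_i x 0 i * C i l) *: e`_l.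
  move=> x; rewrite mulmx_sum_row.
  under eq_bigr => i _ do rewrite (proj2 (HC i)) scaler_sumr.
  rewrite exchange_big /=; apply: eq_bigr => l _; rewrite scaler_suml.
  by apply: eq_bigr => i _; rewrite scalerA.
exists (invmx B *m t); split.
  move=> w [x [Rx ->]]; rewrite pt; apply: Rsum => // i _; apply: RM => //.
  exact: (proj1 (HC i)).
move=> k; have [x [Rx ex]] := eW _ (mem_nth 0 (ltn_ord k)).
rewrite ex pt.
pose d := fun l : 'I_(size e) => \sum_i x 0 i * C i l - (l == k)%:R.
have hR : forall l, Rp (d l).
  move=> l; apply: RB => //; last by apply: Rnat.
  apply: Rsum => // i _; apply: RM => //; exact: (proj1 (HC i)).
have hS : \sum_(l < size e) d l *: e`_l = 0.
  under eq_bigr => l _ do rewrite scalerBl.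
  rewrite sumrB -expand -ex (bigD1 k) //= eqxx scale1r big1 ?addr0 ?subrr //.
  by move=> l /negbTE ->; rewrite scale0r.
have := eind d hR hS j.
by move/eqP; rewrite subr_eq0 => /eqP ->; rewrite eq_sym.
Qed.

End WLemmas.

Section Helpers.
Context {K : realFieldType} {n : nat}.

Lemma sum_cat (a b : seq 'rV[K]_n) (c : nat -> K) :
  \sum_(0 <= i < size (a ++ b)) c i *: (a ++ b)`_i =
  \sum_(0 <= i < size a) c i *: a`_i + \sum_(0 <= i < size b) c (size a + i) *: b`_i.
Proof.
rewrite size_cat (@big_cat_nat _ _ _ (size a)) /= ?leq_addr //; congr (_ + _).
  by apply: eq_big_nat => i /andP[_ ilt]; rewrite nth_cat ilt.
rewrite -{1}(add0n (size a)) big_addn addKn; apply: eq_big_nat => i _.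
by rewrite nth_cat ltnNge leq_addl /= addnK addnC.
Qed.

Lemma ord_nat_sum (e : seq 'rV[K]_n) (r : 'I_(size e) -> K) :
  exists c : nat -> K, (forall i : 'I_(size e), c i = r i) /\
    (forall k, (size e <= k)%N -> c k = 0) /\
    \sum_(i < size e) r i *: e`_i = \sum_(0 <= k < size e) c k *: e`_k.
Proof.
exists (fun k => if insub k is Some i then r i else 0); split; last split.
- by move=> i; rewrite valK.
- by move=> k ke; rewrite insubF // ltnNge ke.
rewrite big_mkord; apply: eq_bigr => i _; by rewrite valK.
Qed.

Lemma basis_nz (Rp : K -> Prop) (Rsub : is_subring Rp) B (e : seq 'rV[K]_n) v :
  is_R_basis Rp B e -> v \in e -> v != 0.
Proof.
move=> [_ _ ind] ve; apply/eqP => v0.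
have il : (index v e < size e)%N by rewrite index_mem.
have hS : \sum_(k < size e) (k == Ordinal il)%:R *: e`_k = 0.
  have ev : e`_(Ordinal il) = v by exact: nth_index.
  rewrite (bigD1 (Ordinal il)) //= eqxx scale1r ev big1 ?addr0 //.
  by move=> k /negbTE ->; rewrite scale0r.
have := ind _ (fun k => Rnat Rsub _) hS (Ordinal il).
by rewrite eqxx => /eqP; rewrite oner_eq0.
Qed.

End Helpers.

Definition pb (P : Prop) : bool := if excluded_middle_informative P then true else false.
Lemma pbP (P : Prop) : reflect P (pb P).
Proof. rewrite /pb; case: excluded_middle_informative => h; by constructor. Qed.

Section Main.
Context {K : realFieldType} {n : nat} (Rp : K -> Prop) (B : 'M[K]_n)
  (S : seq (seq 'rV[K]_n)) (gen : 'I_(size S) -> 'rV[K]_n) (s : 'I_(size S)).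
Hypothesis pis : principal_ideal_subring Rp.
Hypothesis Bu : B \in unitmx.
Hypothesis fan : is_Nfan B S.
Hypothesis pg : prim_gens B S gen.

Let Rsub : is_subring Rp := proj1 pis.
Let sigma := cone_of S s.

Lemma cone_ofE i x : cone_of S i x <-> ncone (nth [::] S i) x.
Proof. exact: coneE. Qed.

Lemma face_sub (T C : @vset K n) : is_face T C -> forall x, T x -> C x.
Proof. by move=> [u [_ H]] x /H []. Qed.

Lemma single_scale (v w : 'rV[K]_n) a : 0 < a -> w = a *: v ->
  forall x, ncone [:: v] x <-> ncone [:: w] x.
Proof.
move=> a0 -> x; split => /ncone_single [t [t0 ->]]; apply/ncone_single.
  exists (t / a); split; first by rewrite divr_ge0 // ltW.
  by rewrite scalerA divfK // gt_eqF.
by exists (t * a); split; [rewrite mulr_ge0 // ltW | rewrite scalerA].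
Qed.

Lemma single_pos (v w : 'rV[K]_n) : w != 0 -> ncone [:: v] w ->
  exists a, 0 < a /\ w = a *: v.
Proof.
move=> w0 /ncone_single [a [a0 ea]]; exists a; split => //.
rewrite lt0r a0 andbT; apply: contraNneq w0 => a00; by rewrite ea a00 scale0r.
Qed.

Lemma ray_gen r : is_ray S r ->
  [/\ forall x, cone_of S r x <-> ncone [:: gen r] x, gen r != 0, inN B (gen r) &
      forall w, inN B w -> (exists t, 0 <= t /\ w = t *: gen r) -> exists k : nat, w = k%:R *: gen r].
Proof.
move=> rr; have [gN gC g0 gprim] := pg rr.
have [v [v0 ev]] := rr.
have ecv : forall x, cone_of S r x <-> ncone [:: v] x by move=> x; rewrite -coneE; exact: ev.
have [a [a0 ea]] := single_pos g0 (proj1 (ecv _) gC).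
have eq2 : forall x, cone_of S r x <-> ncone [:: gen r] x.
  by move=> x; rewrite ecv; exact: single_scale a0 ea x.
split => // w wN wc; apply: gprim => //; apply/eq2; apply/ncone_single; exact: wc.
Qed.

Lemma gen_in r : is_ray S r -> cone_of S r (gen r).
Proof. by move=> rr; have [] := pg rr. Qed.

Lemma fset_eq i j : (forall x, cone_of S i x <-> cone_of S j x) -> i = j.
Proof. by case: fan => _ _ _ _ H; apply: H. Qed.

Lemma rays_eq r r' : is_ray S r -> is_ray S r' ->
  (forall x, cone_of S r' x -> cone_of S r x) -> r' = r.
Proof.
move=> rr rr' sub; have [e1 g0 _ _] := ray_gen rr; have [e1' g0' _ _] := ray_gen rr'.
have [a [a0 ea]] := single_pos g0' (proj1 (e1 _) (sub _ (gen_in rr'))).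
apply: fset_eq => x; rewrite e1 e1'; split => /(single_scale a0 ea x) //.
Qed.

Lemma ray_gen_in r : ray_of S r sigma -> sigma (gen r).
Proof. by move=> [rr fr]; apply: (face_sub fr); apply: gen_in. Qed.

Lemma genW r : is_ray S r -> inW Rp B (gen r).
Proof. by move=> rr; have [_ _ gN _] := ray_gen rr; apply: inN_W. Qed.

Definition Dprop := forall r, ray_of S r sigma -> exists m, inWdual Rp B m /\
  forall r', ray_of S r' sigma -> rhoN S gen r' m = (r' == r)%:R.

Section Dfun.
Hypothesis Dh : Dprop.
Definition mf (r : 'I_(size S)) : 'cV[K]_n :=
  match excluded_middle_informative (ray_of S r sigma) with
  | left h => proj1_sig (constructive_indefinite_description _ (Dh h))
  | right _ => 0 end.
Lemma mfW r : inWdual Rp B (mf r).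
Proof.
rewrite /mf; case: excluded_middle_informative => h; last exact: Wd0.
by case: constructive_indefinite_description => m [].
Qed.
Lemma mfP r r' : ray_of S r sigma -> ray_of S r' sigma -> rhoN S gen r' (mf r) = (r' == r)%:R.
Proof.
move=> h h'; rewrite /mf; case: excluded_middle_informative => // h2.
by have [_ H] := proj2_sig (constructive_indefinite_description _ (Dh h2)); apply: H.
Qed.
Lemma sum_delta (a : 'I_(size S) -> K) r' : (forall r, ~ ray_of S r sigma -> a r = 0) ->
  ray_of S r' sigma -> rhoN S gen r' (\sum_r a r *: mf r) = a r'.
Proof.
move=> a0 h'; rewrite /rhoN pairing_sumr (bigD1 r') //= pairingZr -/(rhoN S gen r' _).
rewrite mfP // eqxx mulr1 big1 ?addr0 // => r rr'; rewrite pairingZr.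
case: (pbP (ray_of S r sigma)) => h; last by rewrite a0 // mul0r.
by rewrite -/(rhoN S gen r' _) mfP // eq_sym (negbTE rr') mulr0.
Qed.
End Dfun.

Lemma T1 : A_sigma_eq_A Rp B S gen s <-> Dprop.
Proof.
split.
  move=> H r hr.
  have [|c [m [mW cR c0 ey]]] := H (fun r' => (r' == r)%:R).
    by move=> r' _; apply: Rnat.
  exists m; split => // r' hr'; rewrite ey ?c0 ?add0r //; exact: hr'.1.
move=> Dh y yR.
pose a := fun r => if pb (ray_of S r sigma) then y r else 0.
have a0 : forall r, ~ ray_of S r sigma -> a r = 0.
  by move=> r h; rewrite /a; case: pbP.
pose m := \sum_r a r *: mf Dh r.
exists (fun r => y r - rhoN S gen r m), m; split.
- apply: Wd_sum => // r _; apply: WdZ => //; last exact: mfW.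
  by rewrite /a; case: pbP => [[h _]|_]; [apply: yR|apply: R0].
- move=> r rr; apply: RB => //; first exact: yR.
  by apply: Wd_sum => // [r' _|]; [apply: WdZ => //; [rewrite /a; case: pbP => [[h _]|_]; [apply: yR|apply: R0]|exact: mfW] | exact: genW].
- move=> r hr; rewrite /m sum_delta // /a; case: pbP => // _; by rewrite subrr.
- by move=> r _; rewrite subrK.
Qed.

Lemma T4 : cond_iii Rp B S gen s -> cond_ii Rp B S gen s.
Proof.
move=> H T fT nT.
have [t et] : exists t, set_eq (cone_of S t) T.
  by case: fan => _ _ F _ _; apply: F fT.
have [u [pu uW u1]] := H t.
exists u; split => //.
  move=> x Tx; apply: pu; split; [exact: (face_sub fT) | exact/et].
move=> r hr nr; apply: u1 => // [[rr fr]]; apply: nr; split => //.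
apply: is_face_eq fr => //; exact: et.
Qed.


Lemma sigma0 : sigma 0.
Proof. apply/cone_ofE; exact: ncone0. Qed.

Lemma zero_face : (exists r, ray_of S r sigma) -> is_face (fun x : 'rV[K]_n => x = 0) sigma.
Proof.
move=> [r [rr fr]]; have [e1 g0 _ _] := ray_gen rr.
have fZ : is_face (fun x : 'rV[K]_n => x = 0) (cone_of S r).
  exists (gen r)^T; split.
    move=> x /e1 /ncone_single [t [t0 ->]]; rewrite pairingZl mulr_ge0 // ltW //.
    by rewrite pairing_tr.
  move=> x; split.
    by move=> ->; split; [apply/e1; exact: ncone0| exact: pairing0l].
  have pp : 0 < pairing (gen r) (gen r)^T by rewrite pairing_tr.
  move=> [/e1 /ncone_single [t [t0 ->]]]; rewrite pairingZl => /eqP.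
  by rewrite mulf_eq0 (gt_eqF pp) orbF => /eqP ->; rewrite scale0r.
have [j ej] : exists j, set_eq (cone_of S j) (fun x : 'rV[K]_n => x = 0).
  by case: fan => _ _ F _ _; apply: F fZ.
have fi : is_face (Defs.setI sigma (cone_of S j)) sigma.
  by case: fan => _ _ _ F _; exact: (F s j).1.
apply: is_face_eq fi => // x; split.
  by move=> [_ /ej].
by move=> x0; split; [rewrite x0; exact: sigma0| apply/ej].
Qed.

Lemma T2 : cond_ii Rp B S gen s -> Dprop.
Proof.
move=> H r hr; have [rr fr] := hr; have [e1 g0 gN _] := ray_gen rr.
have fZ := zero_face (ex_intro _ r hr).
have nZ : ~ set_eq (fun x : 'rV[K]_n => x = 0) sigma.
  by move=> eZ; move/eqP: g0; apply; apply/eZ; exact: ray_gen_in.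
have [u0 [_ u0W u01]] := H _ fZ nZ.
have u0r : forall r', ray_of S r' sigma -> rhoN S gen r' u0 = 1.
  move=> r' hr'; apply: u01 => // [[rr' fr']].
  have [_ g0' _ _] := ray_gen rr'.
  by move/eqP: g0'; apply; apply: (face_sub fr'); apply: gen_in.
case: (classic (set_eq (cone_of S r) sigma)) => [eq|neq].
  exists u0; split => // r' hr'; rewrite u0r //.
  suff -> : r' = r by rewrite eqxx.
  apply: rays_eq => //; first exact: hr'.1.
  by move=> x /(face_sub hr'.2) /eq.
have [ur [pur urW ur1]] := H _ fr neq.
exists (u0 - ur); split; first exact: WdB.
move=> r' hr'; rewrite /rhoN pairingBr -!/(rhoN S gen r' _) u0r //.
case: (eqVneq r' r) => [->|ne].
  by rewrite /rhoN pur ?subr0 //; apply: gen_in.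
rewrite ur1 ?subrr // => [[rr' fr']]; move/eqP: ne; apply.
by apply: rays_eq => //; apply: face_sub fr'.
Qed.


Lemma face_trans_of i (F G : @vset K n) : is_face F (cone_of S i) -> is_face G F ->
  is_face G (cone_of S i).
Proof.
move=> f1 f2; have e : set_eq (cone_of S i) (ncone (nth [::] S i)) by move=> x; exact: cone_ofE.
have e' : set_eq (ncone (nth [::] S i)) (cone_of S i) by move=> x; split => /e.
apply: is_face_eq (face_trans (is_face_eq _ e f1) f2) => //.
Qed.

Lemma T3 : Dprop -> cond_iii Rp B S gen s.
Proof.
move=> Dh t.
pose a := fun r => if pb (ray_of S r sigma /\ ~ ray_of S r (cone_of S t)) then 1 else 0 : K.
have a0 : forall r, ~ ray_of S r sigma -> a r = 0.
  by move=> r h; rewrite /a; case: pbP => // [[]].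
exists (\sum_r a r *: mf Dh r); split; last 2 first.
- apply: Wd_sum => // r _; apply: WdZ => //; last exact: mfW.
  by rewrite /a; case: pbP => _; [apply: R1|apply: R0].
- move=> r hr nr; rewrite (sum_delta Dh a0 hr) /a; case: pbP => // h.
  by exfalso; apply: h.
set F := Defs.setI sigma (cone_of S t).
have [fF fFt] : is_face F sigma /\ is_face F (cone_of S t) by case: fan => _ _ _ H _; apply: H.
have [j ej] : exists j, set_eq (cone_of S j) F by case: fan => _ _ H _ _; apply: H fF.
have shj : sharp (ncone (nth [::] S j)).
  move=> x /cone_ofE h1 /cone_ofE h2; by case: fan => _ H _ _ _; apply: (H j).
have [g' [eg' fg']] := sharp_rays shj.
have eF : set_eq (ncone (nth [::] S j)) F.
  by move=> x; rewrite -cone_ofE; exact: ej.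
have key : forall v, v \in g' -> pairing v (\sum_r a r *: mf Dh r) = 0.
  move=> v vg; have [v0 fv] := fg' v vg.
  have fvF : is_face (ncone [:: v]) F by apply: is_face_eq fv.
  have fvs := face_trans_of fF fvF; have fvt := face_trans_of fFt fvF.
  have [r er] : exists r, set_eq (cone_of S r) (ncone [:: v]).
    by case: fan => _ _ H _ _; apply: H fvs.
  have rr : is_ray S r by exists v; split => // x; rewrite er coneE.
  have er' : set_eq (ncone [:: v]) (cone_of S r) by move=> x; split => /er.
  have hs : ray_of S r sigma by split => //; apply: is_face_eq fvs.
  have ht : ray_of S r (cone_of S t) by split => //; apply: is_face_eq fvt.
  have [e1 _ _ _] := ray_gen rr.
  have [c [_ ec]] : exists c, 0 <= c /\ v = c *: gen r.
    by apply/ncone_single/e1/er; apply/ncone_single; exists 1; rewrite scale1r.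
  rewrite ec pairingZl -/(rhoN S gen r _) (sum_delta Dh a0 hs) /a.
  by case: pbP => [[_ []]|] //; rewrite mulr0.
move=> x [xs xt]; have : ncone g' x by apply/eg'/eF.
move=> [l [_ ->]]; rewrite pairing_suml big_nat_cond big1 // => i /andP[/andP[_ ilt] _].
by rewrite pairingZl key ?mulr0 // mem_nth.
Qed.


Lemma sharp_sigma : sharp (ncone (nth [::] S s)).
Proof. move=> x /cone_ofE h1 /cone_ofE h2; by case: fan => _ H _ _ _; apply: (H s). Qed.

Lemma T6 : W_regular Rp B sigma -> Dprop.
Proof.
move=> [e [eb [s' [sub es']]]].
have es : forall x, sigma x <-> ncone s' x by move=> x; rewrite -coneE; exact: es'.
have Lv : forall r, ray_of S r sigma -> exists v mu, [/\ v \in e, 0 < mu & v = mu *: gen r].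
  move=> r [rr [u [u0 eu]]]; have [e1 g0 _ _] := ray_gen rr.
  have [gs' gu] : sigma (gen r) /\ pairing (gen r) u = 0 by apply/eu; apply: gen_in.
  have [l [l0 el]] := proj1 (es _) gs'.
  have us' : forall v, v \in s' -> 0 <= pairing v u.
    by move=> v vs; apply: u0; apply/es; apply: ncone_mem.
  have t0 := nsum_terms0 l0 us' (etrans (esym (f_equal (fun z => pairing z u) el)) gu).
  have [i [ilt li]] : exists i, (i < size s')%N /\ l i != 0.
    apply: NNPP => H; move/eqP: g0; apply; rewrite el big_nat_cond big1 //.
    move=> i /andP[/andP[_ ilt] _]; case: (eqVneq (l i) 0) => [->|li]; first by rewrite scale0r.
    by exfalso; apply: H; exists i.
  have ui : pairing s'`_i u = 0.
    by move/eqP: (t0 i ilt); rewrite mulf_eq0 (negbTE li) /= => /eqP.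
  have ci : cone_of S r s'`_i.
    by apply/eu; split => //; apply/es; apply: ncone_mem; rewrite mem_nth.
  have sie : s'`_i \in e by apply: sub; rewrite mem_nth.
  have [mu [mu0 emu]] := single_pos (basis_nz Rsub eb sie) (proj1 (e1 _) ci).
  by exists s'`_i, mu; split.
move=> r hr; have [v [mu [ve mu0 ev]]] := Lv r hr.
have il : (index v e < size e)%N by rewrite index_mem.
have [u [uW uk]] := dual_coord Rsub Bu (Ordinal il) eb.
have [e1 g0 gN gprim] := ray_gen hr.1.
have Rmu : Rp mu.
  have [eW _ _] := eb.
  have [x [Rx ex]] := eW v ve.
  by apply: (gen_R Rsub Bu gN g0 gprim Rx); rewrite -ex.
exists (mu *: u); split; first exact: WdZ.
have pv : pairing v u = 1.
  have ev0 : e`_(Ordinal il) = v by exact: nth_index.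
  by have := uk (Ordinal il); rewrite eqxx ev0.
move=> r' hr'; rewrite /rhoN pairingZr.
case: (eqVneq r' r) => [->|ne].
  have -> : gen r = mu^-1 *: v by rewrite ev scalerA mulVf ?scale1r // gt_eqF.
  by rewrite pairingZl pv mulr1 mulfV ?gt_eqF // eqxx.
have [v' [mu' [ve' mu0' ev']]] := Lv r' hr'.
have il' : (index v' e < size e)%N by rewrite index_mem.
have vv : v' != v.
  apply/eqP => evv; move/eqP: ne; apply; apply: rays_eq; [exact: hr.1| exact: hr'.1|].
  have [e1' g0' _ _] := ray_gen hr'.1.
  have eg : gen r' = (mu / mu') *: gen r.
    rewrite -[gen r']scale1r -(mulVf (lt0r_neq0 mu0')) -(scalerA mu'^-1 mu') -ev' evv ev scalerA.
    by rewrite mulrC.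
  move=> x /e1' /(single_scale _ eg x) h; apply/e1; apply: h.
  by rewrite divr_gt0.
have pv' : pairing v' u = 0.
  have ev'' : e`_(Ordinal il') = v' by exact: nth_index.
  have := uk (Ordinal il'); rewrite ev'' => ->.
  case: eqP => [eii|//]; have eii' := congr1 val eii; simpl in eii'; exfalso; move/eqP: vv; apply.
  by rewrite -(nth_index 0 ve') eii' nth_index.
have -> : gen r' = mu'^-1 *: v' by rewrite ev' scalerA mulVf ?scale1r // gt_eqF.
by rewrite pairingZl pv' !mulr0.
Qed.


Lemma T5 : Dprop -> W_regular Rp B sigma.
Proof.
move=> Dh.
set rs := [seq r <- enum 'I_(size S) | pb (ray_of S r sigma)].
have urs : uniq rs by rewrite filter_uniq // enum_uniq.
have mrs : forall r, (r \in rs) = pb (ray_of S r sigma) by move=> r; rewrite mem_filter mem_enum andbT.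
have rsP : forall r, r \in rs -> ray_of S r sigma by move=> r; rewrite mrs => /pbP.
set L := map gen rs.
have eqL : forall x, sigma x <-> ncone L x.
  have [g' [eg' fg']] := sharp_rays sharp_sigma.
  have es : set_eq (ncone (nth [::] S s)) sigma by move=> x; split => /cone_ofE.
  move=> x; split.
    move=> /cone_ofE /eg'; apply: ncone_gen => v vg.
    have [v0 fv] := fg' v vg.
    have fvs : is_face (ncone [:: v]) sigma by apply: is_face_eq fv.
    have [r er] : exists r, set_eq (cone_of S r) (ncone [:: v]).
      by case: fan => _ _ H _ _; apply: H fvs.
    have rr : is_ray S r by exists v; split => // y; rewrite er coneE.
    have hr : ray_of S r sigma by split => //; apply: is_face_eq fvs => // y; split => /er.
    have [e1 _ _ _] := ray_gen rr.
    have [c [c0 ec]] : exists c, 0 <= c /\ v = c *: gen r.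
      by apply/ncone_single/e1/er; apply/ncone_single; exists 1; rewrite scale1r.
    rewrite ec; apply: nconeZ => //; apply: ncone_mem; apply: map_f.
    by rewrite mrs; apply/pbP.
  move=> cx; apply/cone_ofE; apply: ncone_gen cx => v /mapP [r rrs ->].
  by apply/cone_ofE; apply: ray_gen_in; apply: rsP.
pose P := fun x : 'rV[K]_n => (forall i, Rp (x 0 i)) /\
  forall r, ray_of S r sigma -> pairing (x *m B) (mf Dh r) = 0.
have sP : submodP Rp P.
  split.
  - by split => [i|r _]; [rewrite mxE; exact: R0| rewrite mul0mx pairing0l].
  - move=> x y [Rx px] [Ry py]; split => [i|r hr]; first by rewrite mxE; apply: RD.
    by rewrite mulmxDl pairingDl px ?py ?addr0.
  - move=> a x Ra [Rx px]; split => [i|r hr]; first by rewrite mxE; apply: RM.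
    by rewrite -scalemxAl pairingZl px ?mulr0.
have [f [fP fsp find]] : exists f, nbasis Rp P f.
  apply: (pid_basis Rsub pis.2 (k := n) sP) => x [Rx _]; split => // i ni.
  by exfalso; move: (ltn_ord i); rewrite ltnNge ni.
set fB := map (fun x => x *m B) f.
have sfB : size fB = size f by rewrite size_map.
have nfB : forall j, (j < size f)%N -> fB`_j = f`_j *m B.
  by move=> j jf; rewrite (nth_map 0).
exists (L ++ fB); split; last first.
  exists L; split; first by move=> v vL; rewrite mem_cat vL.
  by move=> x; rewrite eqL coneE.
split.
- move=> v; rewrite mem_cat => /orP[/mapP [r rrs ->]|/mapP [x xf ->]].
    by apply: genW; exact: (rsP r rrs).1.
  by exists x; split => //; exact: (fP x xf).1.
- move=> w Ww.
  pose c := fun i => pairing w (mf Dh (nth s rs i)).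
  pose SL := \sum_(r <- rs) pairing w (mf Dh r) *: gen r.
  have eSL : SL = \sum_(0 <= i < size L) c i *: L`_i.
    rewrite /SL (big_nth s) size_map; apply: eq_big_nat => i /andP[_ ilt].
    by rewrite (nth_map s).
  have Rc : forall r, Rp (pairing w (mf Dh r)) by move=> r; apply: mfW.
  set w' := w - SL.
  have W' : inW Rp B w'.
    apply: inWB => //; rewrite /SL big_seq; apply: inW_sum => // r rrs.
    by apply: inWZ => //; apply: genW; exact: (rsP r rrs).1.
  set x' := w' *m invmx B.
  have Px' : P x'.
    split; first by apply/inW_iff.
    move=> r hr; rewrite mulmxKV // /w' pairingBl /SL pairing_suml.
    rewrite (bigD1_seq r) //= ?mrs; last by apply/pbP.
    rewrite pairingZl -/(rhoN S gen r _) mfP // eqxx mulr1 big_seq_cond big1 ?addr0 ?subrr //.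
    move=> r' /andP[r'rs ne]; rewrite pairingZl -/(rhoN S gen r' _) mfP //; last exact: rsP.
    by rewrite (negbTE ne) mulr0.
  have [d [Rd ed]] := fsp x' Px'.
  pose C := fun k => if (k < size L)%N then c k else d (k - size L)%N.
  exists (fun i => C i); split.
    by move=> i; rewrite /C; case: ifP => _ //; apply: Rc.
  transitivity (\sum_(0 <= i < size (L ++ fB)) C i *: (L ++ fB)`_i); last by rewrite big_mkord.
  rewrite sum_cat.
  have -> : \sum_(0 <= i < size L) C i *: L`_i = SL.
    by rewrite eSL; apply: eq_big_nat => i /andP[_ ilt]; rewrite /C ilt.
  have -> : \sum_(0 <= i < size fB) C (size L + i) *: fB`_i = w'.
    rewrite sfB /w'; rewrite -[w - SL](mulmxKV Bu) -/x' ed mulmx_suml.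
    apply: eq_big_nat => j /andP[_ jf]; rewrite /C ltnNge leq_addr /= addKn nfB //.
    by rewrite scalemxAl.
  by rewrite /w' addrC subrK.
- move=> r Rr e0 i.
  have [c [cr [cz ec]]] := ord_nat_sum r.
  have Rc : forall k, Rp (c k).
    move=> k; case: (ltnP k (size (L ++ fB))) => kl; last by rewrite cz //; apply: R0.
    by have := cr (Ordinal kl); move=> /= ->.
  move: e0; rewrite ec sum_cat => e0.
  have cL : forall k, (k < size L)%N -> c k = 0.
    move=> k kL; set r0 := nth s rs k.
    have kr : (k < size rs)%N by rewrite -(size_map gen).
    have hr0 : ray_of S r0 sigma by apply: rsP; rewrite mem_nth.
    have := congr1 (fun z => pairing z (mf Dh r0)) e0; rewrite /= pairingDl !pairing_suml pairing0l.
    rewrite [X in _ + X = _]big_nat_cond [X in _ + X = _]big1 ?addr0; last first.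
      move=> j /andP[/andP[_ jf] _]; rewrite pairingZl; rewrite sfB in jf.
      by rewrite nfB // (proj2 (fP _ (mem_nth 0 jf))) // mulr0.
    rewrite (bigD1_seq k) ?mem_index_iota ?iota_uniq //= big_seq_cond big1 ?addr0.
      rewrite pairingZl (nth_map s) // -/(rhoN S gen _ _) mfP // eqxx mulr1 //.
    move=> j /andP[]; rewrite mem_index_iota => /andP[_ jL] jk.
    have jr : (j < size rs)%N by rewrite -(size_map gen).
    rewrite pairingZl (nth_map s) // -/(rhoN S gen _ _) mfP //; last by apply: rsP; rewrite mem_nth.
    by rewrite nth_uniq // (negbTE jk) mulr0.
  have e1 : \sum_(0 <= j < size f) c (size L + j) *: f`_j = 0.
    move: e0; rewrite big_nat_cond big1 ?add0r; last first.
      by move=> k /andP[/andP[_ kL] _]; rewrite cL // scale0r.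
    rewrite sfB => e0'.
    have H : (\sum_(0 <= j < size f) c (size L + j) *: fB`_j) *m invmx B = 0.
      by rewrite e0' mul0mx.
    transitivity ((\sum_(0 <= j < size f) c (size L + j) *: fB`_j) *m invmx B); last exact: H.
    rewrite mulmx_suml; apply: eq_big_nat => j /andP[_ jf].
    by rewrite nfB // -scalemxAl mulmxK.
  have cf : forall j, (j < size f)%N -> c (size L + j) = 0.
    exact: (find (fun j => c (size L + j)) (fun j => Rc _) e1).
  rewrite -cr; case: (ltnP i (size L)) => iL; first exact: cL.
  rewrite -(subnKC iL); apply: cf.
  have ilt : (i < size L + size f)%N by rewrite -sfB -size_cat; exact: ltn_ord.
  move: iL ilt; generalize (nat_of_ord i) (size L) (size f) => a b c' h1 h2; lia.
Qed.


Lemma main_equiv :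
  (A_sigma_eq_A Rp B S gen s <-> cond_ii Rp B S gen s) /\
  (cond_ii Rp B S gen s <-> cond_iii Rp B S gen s) /\
  (cond_iii Rp B S gen s <-> W_regular Rp B (cone_of S s)).
Proof.
split; [|split].
- split => h; first by apply: T4; apply: T3; apply/T1.
  by apply/T1; apply: T2.
- split => h; [apply: T3; exact: T2 h| exact: T4].
- split => h; first by apply: T5; apply: T2; exact: T4.
  by apply: T3; exact: T6.
Qed.

End Main.

Theorem proposition1p260 (K : realFieldType) (n : nat) (Rp : K -> Prop)
  (B : 'M[K]_n) (S : seq (seq 'rV[K]_n)) (gen : 'I_(size S) -> 'rV[K]_n)
  (s : 'I_(size S)) :
  principal_ideal_subring Rp ->
  B \in unitmx ->
  is_Nfan B S ->
  prim_gens B S gen ->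
  (A_sigma_eq_A Rp B S gen s <-> cond_ii Rp B S gen s) /\
  (cond_ii Rp B S gen s <-> cond_iii Rp B S gen s) /\
  (cond_iii Rp B S gen s <-> W_regular Rp B (cone_of S s)).
Proof. move=> pis Bu fan pg; exact: main_equiv. Qed.
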